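(* Let $G=(V,E)$ be a word-representable graph with $n=|V|$ and representation number $k$. Unless $G$ is a circle graph containing $K_{n-1}$ as an induced subgraph, $G$ is $\left(\lceil kn/2\rceil-1\right)$-complete square-free uniform word-representable.
   Context: A graph $G=(V,E)$ is word-representable if there is a word $w$ over $V$, containing every letter of $V$, such that distinct $x,y\in V$ alternate in $w$ (deleting all other letters yields $xyxy\cdots$ or $yxyx\cdots$) iff $xy\in E$; $w$ represents $G$. A word is $k$-uniform if every letter occurs exactly $k$ times, and uniform if it is $k$-uniform for some $k$. The representation number of a word-representable graph is the least $k$ such that it is represented by a $k$-uniform word. For a word $w$ over $\Sigma$ and $S\subseteq\Sigma$, $w_S$ denotes the word obtained from $w$ by deleting all letters not in $S$. For an integer $p\ge1$, $w$ contains a $p$-complete square if there exists $S\subseteq\Sigma$ such that $w_S$ contains a factor $XX$ with $X\in S^+$ and $|X|\ge p$; otherwise $w$ is $p$-complete square-free. A graph $G$ is $p$-complete square-free uniform word-representable if it is represented by a uniform word $w$ that is $p$-complete square-free. *)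

(* Defs.v *)
From mathcomp Require Import all_boot.
Set Implicit Arguments. Unset Strict Implicit. Unset Printing Implicit Defensive.

Definition simple_graph (V : finType) (E : rel V) : Prop :=
  symmetric E /\ irreflexive E.

Definition restrict (V : finType) (S : {set V}) (w : seq V) : seq V :=
  [seq a <- w | a \in S].

Definition alternate (V : finType) (w : seq V) (x y : V) : Prop :=
  let u := restrict [set x; y] w in
  forall i, i.+1 < size u -> nth x u i != nth x u i.+1.

Definition represents (V : finType) (E : rel V) (w : seq V) : Prop :=
  (forall x : V, x \in w) /\
  (forall x y : V, x != y -> (alternate w x y <-> E x y)).

Definition k_uniform (V : finType) (k : nat) (w : seq V) : Prop :=
  forall x : V, count_mem x w = k.

Definition uniform (V : finType) (w : seq V) : Prop :=
  exists k, k_uniform k w.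

Definition word_representable (V : finType) (E : rel V) : Prop :=
  exists w : seq V, represents E w.

Definition representation_number (V : finType) (E : rel V) (k : nat) : Prop :=
  (exists w : seq V, k_uniform k w /\ represents E w) /\
  (forall k', k' < k -> ~ exists w : seq V, k_uniform k' w /\ represents E w).

Definition has_complete_square (V : finType) (p : nat) (w : seq V) : Prop :=
  exists (S : {set V}) (u X v : seq V),
    [/\ X != [::], all (fun a => a \in S) X, p <= size X &
        restrict S w = u ++ X ++ X ++ v].

Definition complete_square_free (V : finType) (p : nat) (w : seq V) : Prop :=
  ~ has_complete_square p w.

Definition csf_uniform_word_representable (V : finType) (E : rel V) (p : nat)
  : Prop :=
  exists w : seq V, uniform w /\ represents E w /\ complete_square_free p w.

(* Circle graphs: intersection graphs of chords of a circle.  Chord of x has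
   endpoints at positions (c x).1, (c x).2 on the circle (cyclic order given by
   the order on nat); all endpoints pairwise distinct.  Two such chords cross
   iff their endpoints interleave. *)
Definition strictly_between (a b t : nat) : bool := (minn a b < t < maxn a b).

Definition chords_cross (c d : nat * nat) : bool :=
  strictly_between c.1 c.2 d.1 (+) strictly_between c.1 c.2 d.2.

Definition circle_graph (V : finType) (E : rel V) : Prop :=
  exists c : V -> nat * nat,
    injective (fun p : V * bool => if p.2 then (c p.1).1 else (c p.1).2) /\
    (forall x y : V, x != y -> (E x y <-> chords_cross (c x) (c y))).

Definition has_induced_clique (V : finType) (E : rel V) (m : nat) : Prop :=
  exists A : {set V}, #|A| = m /\
    (forall x y, x \in A -> y \in A -> x != y -> E x y).

(* Main.v *)
Require Import Defs.
From mathcomp Require Import all_boot zify.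
Set Implicit Arguments. Unset Strict Implicit. Unset Printing Implicit Defensive.

Section Aux.
Variable V : finType.
Implicit Types (w s r : seq V) (x y z a : V).

Definition neqr : rel V := fun a b => a != b.

Lemma alternateE w x y : alternate w x y <-> sorted neqr (restrict [set x; y] w).
Proof.
rewrite /alternate; split => [H|H i Hi].
  by apply/(sortedP x) => i Hi; apply: H.
by move/(sortedP x): H; apply.
Qed.

Lemma restrict_cat (S : {set V}) s1 s2 : restrict S (s1 ++ s2) = restrict S s1 ++ restrict S s2.
Proof. by rewrite /restrict filter_cat. Qed.

Lemma count_restrict (S : {set V}) z s : count_mem z (restrict S s) = if z \in S then count_mem z s else 0.
Proof.
rewrite /restrict count_filter; case: ifP => zS.
  by apply: eq_count => t /=; case: eqP => // ->; rewrite zS.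
by rewrite (eq_in_count (a2 := pred0)) ?count_pred0 // => t _ /=; case: eqP => // ->; rewrite zS.
Qed.

Lemma restrict_restrict (S T : {set V}) s : {subset T <= S} -> restrict T (restrict S s) = restrict T s.
Proof.
move=> TS; rewrite /restrict -filter_predI; apply: eq_filter => t /=.
by case: (boolP (t \in T)) => // /TS ->.
Qed.

Lemma count_mem_S (S : {set V}) s : count (mem S) s = \sum_(x in S) count_mem x s.
Proof.
elim: s => [|z s IH] /=; first by rewrite big1.
rewrite IH big_split /=; congr (_ + _).
case: (boolP (z \in S)) => zS.
  rewrite (bigD1 z) //= eqxx big1 // => t /andP[_]; rewrite eq_sym; by move/negbTE => ->.
rewrite big1 // => t tS; case: eqP => // ezt; by rewrite ezt tS in zS.
Qed.

Lemma size_restrict (S : {set V}) k s : k_uniform k s -> size (restrict S s) = k * #|S|.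
Proof.
move=> U; rewrite /restrict size_filter count_mem_S.
rewrite (eq_bigr (fun _ => k)) ; [by rewrite sum_nat_const mulnC | move=> i _; exact: U].
Qed.

Lemma restrictT s : restrict [set: V] s = s.
Proof. by rewrite /restrict (eq_filter (a2 := predT)) ?filter_predT // => t; rewrite in_setT. Qed.

Lemma path_count z z' p : z != z' -> path neqr z p -> all (fun t => (t == z) || (t == z')) p ->
  count_mem z (z :: p) = count_mem z' (z :: p) + (last z p == z).
Proof.
elim: p z z' => [|t p IH] z z' /=.
  by move=> nz _ _; rewrite /= eqxx; move: nz; case: eqP => // ->; rewrite eqxx.
move=> nz /andP[ztn pth] /andP[tin alp].
have etz' : t = z'.
  by move: tin ztn => /orP[]/eqP-> //; rewrite /neqr eqxx.
subst t.
have nz' : z' != z by rewrite eq_sym.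
have alp' : all (fun t => (t == z') || (t == z)) p.
  by apply: sub_all alp => t; rewrite orbC.
have /= E := IH z' z nz' pth alp'.
rewrite eqxx (negbTE nz) (negbTE nz') /= in E *.
have : (last z' p == z) || (last z' p == z').
  have : last z' p \in z' :: p by apply: mem_last.
  rewrite inE => /orP[/eqP->|]; first by rewrite eqxx orbT.
  by move/(allP alp).
case/orP => /eqP He; rewrite He in E *; rewrite !eqxx ?(negbTE nz) ?(negbTE nz') /= in E *; lia.
Qed.


Definition in2 x y := fun t : V => (t == x) || (t == y).

Lemma head_last_neq x y z p : x != y -> sorted neqr (z :: p) -> all (in2 x y) (z :: p) ->
  count_mem x (z :: p) = count_mem y (z :: p) -> last z p != z.
Proof.
move=> nxy pth alz E; rewrite /= in pth; move: alz => /andP[zin alp].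
case/orP: zin => /eqP ez; subst z.
  have := path_count nxy pth alp. rewrite E. by case: (last x p == x) => //=; lia.
have nyx : y != x by rewrite eq_sym.
have alp' : all (fun t => (t == y) || (t == x)) p by apply: sub_all alp => t; rewrite /in2 orbC.
have := path_count nyx pth alp'. rewrite -E. by case: (last y p == y) => //=; lia.
Qed.

Lemma sorted_double x y r : x != y -> all (in2 x y) r -> count_mem x r = count_mem y r ->
  r != [::] -> sorted neqr (r ++ r) = sorted neqr r.
Proof.
move=> nxy alr E; case: r alr E => [//|z p] alr E _.
rewrite /= cat_path /=; case pth: (path neqr z p) => //=.
have := head_last_neq nxy pth alr E. rewrite /neqr => ->. done.
Qed.

Lemma sorted_one x y r : x != y -> all (in2 x y) r -> count_mem x r = 1 -> count_mem y r = 1 ->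
  sorted neqr r.
Proof.
move=> nxy; have nyx : y != x by rewrite eq_sym.
case: r => [|a [|b [|c r]]] //=.
- rewrite andbT => /andP[ha hb]; case/orP: ha => /eqP->; case/orP: hb => /eqP->;
   rewrite /neqr ?eqxx ?(negbTE nxy) ?(negbTE nyx) //=.
- move=> /and4P[ha hb hc _].
  case/orP: ha => /eqP ->; case/orP: hb => /eqP ->; case/orP: hc => /eqP ->;
    rewrite ?eqxx ?(negbTE nxy) ?(negbTE nyx) /=; idtac.
all: try (move=> H1 H2; exfalso; simpl in H1, H2; lia).
Qed.

Lemma restrict_in2 x y s : all (in2 x y) (restrict [set x; y] s).
Proof. by apply/allP => t; rewrite mem_filter !inE => /andP[]. Qed.

Lemma count_restrict2 x y s : count_mem x (restrict [set x; y] s) = count_mem x s.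
Proof. by rewrite count_restrict !inE eqxx. Qed.
Lemma count_restrict2' x y s : count_mem y (restrict [set x; y] s) = count_mem y s.
Proof. by rewrite count_restrict !inE eqxx orbT. Qed.
End Aux.
Arguments neqr {V}.
Arguments in2 {V}.

Section Circle.
Variable V : finType.
Implicit Types (w s A B C : seq V) (x y z : V).

Fixpoint occ y (j : nat) w : nat :=
  match w with
  | [::] => 0
  | z :: w' => if z == y then (if j is j'.+1 then (occ y j' w').+1 else 0)
               else (occ y j w').+1
  end.

Lemma occ_lt y j w T : j < count_mem y w -> (occ y j w < T) = (j < count_mem y (take T w)).
Proof.
elim: w j T => [|z w IH] j T //=.
case: T => [|T] /=.
  by move=> _; case: ifP => //; case: j.
case: (z =P y) => [ezy|ne] /=.
  by rewrite !add1n; case: j => [|j] //= H; rewrite ltnS IH.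
by rewrite !add0n => H; rewrite ltnS IH.
Qed.

Lemma occ_nth y j w y0 : j < count_mem y w -> nth y0 w (occ y j w) = y.
Proof.
elim: w j => [|z w IH] j //=.
case: (z =P y) => [ezy|ne] /=.
  by rewrite add1n; case: j => [|j] //= H; rewrite IH.
by rewrite add0n => H; rewrite IH.
Qed.

Lemma occ_mono y j w : j.+1 < count_mem y w -> occ y j w < occ y j.+1 w.
Proof.
elim: w j => [|z w IH] j //=.
case: (z =P y) => [ezy|ne] /=.
  by rewrite add1n; case: j => [|j] //= H; rewrite ltnS IH.
by rewrite add0n => H; rewrite ltnS IH.
Qed.

Lemma occ_cat y j A s : y \notin A -> occ y j (A ++ s) = size A + occ y j s.
Proof.
elim: A => [|z A IH] //= ; rewrite inE negb_or => /andP[nz nA].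
by rewrite eq_sym (negbTE nz) IH.
Qed.

Lemma split_first x w : x \in w -> exists A C, w = A ++ x :: C /\ x \notin A.
Proof.
elim: w => [|z w IH] //=; rewrite inE; case: eqP => [->|ne] /= H.
  by exists [::], w.
have [A [C [-> nA]]] := IH H; exists (z :: A), C; split => //.
by rewrite inE negb_or nA andbT; apply/eqP => e; apply: ne.
Qed.

Lemma split2 x w : count_mem x w = 2 ->
  exists A B C, w = A ++ x :: B ++ x :: C /\ [/\ x \notin A, x \notin B & x \notin C].
Proof.
move=> c2.
have xw : x \in w by rewrite -has_pred1 has_count c2.
have [A [C1 [e1 nA]]] := split_first xw.
have cA : count_mem x A = 0 by apply/count_memPn.
have c1 : count_mem x C1 = 1 by move: c2; rewrite e1 count_cat cA /= eqxx; lia.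
have xC : x \in C1 by rewrite -has_pred1 has_count c1.
have [B [C [e2 nB]]] := split_first xC.
have cB : count_mem x B = 0 by apply/count_memPn.
exists A, B, C; split; first by rewrite e1 e2.
split => //; apply/count_memPn; move: c1; rewrite e2 count_cat cB /= eqxx; lia.
Qed.

Lemma restrict_cons (S : {set V}) z s :
  restrict S (z :: s) = if z \in S then z :: restrict S s else restrict S s.
Proof. by []. Qed.

Lemma restrict_noX x y s : x \notin s -> restrict [set x; y] s = nseq (count_mem y s) y.
Proof.
elim: s => [|z s IH] //=; rewrite inE negb_or => /andP[nz ns].
rewrite /restrict /= !inE eq_sym (negbTE nz) /=.
case: (z =P y) => [->|ne] /=; first by rewrite -[LHS]/(y :: restrict _ s) IH // add1n.
by rewrite add0n -[LHS]/(restrict _ s) IH.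
Qed.

Lemma seq_cross x y (a b c : nat) : x != y -> a + b + c = 2 ->
  sorted neqr (nseq a y ++ x :: nseq b y ++ x :: nseq c y) =
  (((a == 0) && (0 < a + b)) (+) ((a <= 1) && (1 < a + b))).
Proof.
move=> nxy; have nyx : y != x by rewrite eq_sym.
case: a => [|[|[|a]]]; case: b => [|[|[|b]]]; case: c => [|[|[|c]]] //= H;
  try (exfalso; lia); rewrite /neqr ?eqxx ?nxy ?nyx //.
Qed.

Lemma circle2 (E : rel V) w : k_uniform 2 w -> represents E w -> circle_graph E.
Proof.
move=> U [Rin Ralt].
exists (fun x => (occ x 0 w, occ x 1 w)); split.
  move=> [x b] [y b'] /= H.
  have hx : nth x w (if b then occ x 0 w else occ x 1 w) = x by case: b H => _; apply: occ_nth; rewrite U.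
  have hy : nth x w (if b' then occ y 0 w else occ y 1 w) = y by case: b' H => _; apply: occ_nth; rewrite U.
  have exy : x = y by rewrite -hx H hy.
  subst y; clear hx hy; congr pair.
  have m := occ_mono (j := 0) (y := x) (w := w); rewrite U in m.
  by case: b b' H => [] [] // H; move: (m isT); rewrite H ltnn.
move=> x y nxy; rewrite -Ralt // alternateE.
have [A [B [C [ew [nA nB nC]]]]] := split2 (U x).
have ox0 : occ x 0 w = size A by rewrite ew occ_cat //= eqxx addn0.
have ox1 : occ x 1 w = size A + size B + 1.
  by rewrite ew occ_cat //= eqxx occ_cat //= eqxx addn0 addn1 addnS.
have cy : count_mem y A + count_mem y B + count_mem y C = 2.
  move: (U y); rewrite ew !count_cat /= count_cat /= (negbTE (_ : x != y)) //=; lia.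
have rw : restrict [set x; y] w =
   nseq (count_mem y A) y ++ x :: nseq (count_mem y B) y ++ x :: nseq (count_mem y C) y.
  rewrite ew restrict_cat (restrict_noX y nA); congr (_ ++ _).
  rewrite restrict_cons !inE eqxx /= restrict_cat (restrict_noX y nB) restrict_cons !inE eqxx /=.
  by rewrite (restrict_noX y nC).
rewrite rw seq_cross //.
have T1 : take (size A).+1 w = A ++ [:: x].
  by rewrite ew -cat1s catA take_size_cat // size_cat addn1.
have T2 : take (size A + size B + 1) w = A ++ x :: B.
  rewrite ew (_ : A ++ x :: B ++ x :: C = (A ++ x :: B) ++ (x :: C)); last by rewrite -catA.
  by rewrite take_size_cat // size_cat /= addn1 addnS.
have c1 : count_mem y (take (size A).+1 w) = count_mem y A.
  by rewrite T1 count_cat /= (negbTE (_ : x != y)) //= !addn0.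
have c2 : count_mem y (take (size A + size B + 1) w) = count_mem y A + count_mem y B.
  by rewrite T2 count_cat /= (negbTE (_ : x != y)) //= add0n.
rewrite /chords_cross /strictly_between /= ox0 ox1.
have le1 : size A <= size A + size B + 1 by lia.
rewrite (minn_idPl le1) (maxn_idPr le1).
rewrite ![size A < _]ltnNge -![_ <= size A]ltnS.
rewrite !occ_lt ?U // c1 c2.
by case: (count_mem y A) => [|[|a]]; case: (count_mem y B) => [|[|b]].
Qed.
End Circle.

Section Alt.
Variable V : finType.
Implicit Types (w s X : seq V) (x y z a : V).

Lemma alt_sym w x y : alternate w x y <-> alternate w y x.
Proof. by rewrite !alternateE /restrict setUC. Qed.

Lemma alt_double X x y : x != y -> 0 < count_mem x X -> count_mem x X = count_mem y X ->
  (alternate (X ++ X) x y <-> alternate X x y).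
Proof.
move=> nxy cx E; rewrite !alternateE restrict_cat (sorted_double nxy) //.
- exact: restrict_in2.
- by rewrite count_restrict2 count_restrict2' E.
- apply/eqP => e; move: cx; by rewrite -(count_restrict2 x y) e.
Qed.

Lemma alt_one X x y : x != y -> count_mem x X = 1 -> count_mem y X = 1 -> alternate X x y.
Proof.
move=> nxy cx cy; rewrite alternateE; apply: (sorted_one nxy).
- exact: restrict_in2.
- by rewrite count_restrict2.
- by rewrite count_restrict2'.
Qed.
End Alt.

Section Small.
Variable V : finType.

Lemma small_graph (E : rel V) : simple_graph E -> #|V| <= 2 ->
  circle_graph E /\ has_induced_clique E (#|V| - 1).
Proof.
move=> [Esym Eirr] n2.
case: (pickP (@predT V)) => [a _|H0]; last first.
  have c0 : #|V| = 0 by apply: eq_card0 => x; have := H0 x.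
  split.
    exists (fun _ => (0, 0)); split; first by move=> [x ?]; have := H0 x.
    by move=> x; have := H0 x.
  by exists set0; rewrite cards0 c0; split => // x y; rewrite inE.
case: (pickP (fun y => y != a)) => [b nba|Hall]; last first.
  have hall : forall z, z = a by move=> z; have := Hall z => /= /negbFE /eqP.
  split.
    exists (fun _ => (0, 1)); split.
      by move=> [x [|]] [y [|]] //= _; rewrite (hall x) (hall y).
    by move=> x y; rewrite (hall x) (hall y) eqxx.
  exists set0; rewrite cards0; split => //; last by move=> x y; rewrite inE.
  suff : #|V| <= 1 by lia.
  apply/card_le1_eqP => x y _ _; by rewrite (hall x) (hall y).
have hV : forall z, z = a \/ z = b.
  move=> z; case: (z =P a) => [->|nza]; [by left|right].
  have : #|[set~ a]| <= 1 by rewrite cardsC1; lia.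
  move/card_le1_eqP => H; apply: H; rewrite !inE //; exact/eqP.
have nab : a != b by rewrite eq_sym.
split.
  exists (fun x => if x == a then (0, if E a b then 2 else 1) else (if E a b then 1 else 2, 3)).
  split.
    move=> [x b1] [y b2] /=.
    case: (hV x) => ->; case: (hV y) => ->; rewrite ?eqxx ?(negbTE nba);
      case: b1; case: b2; case: (E a b) => //.
  move=> x y nxy.
  case: (hV x) => ex; case: (hV y) => ey; subst x y; rewrite ?eqxx in nxy => //;
    rewrite ?eqxx ?(negbTE nba) //.
    by case: (E a b).
  by rewrite Esym; case: (E a b).
exists [set a]; rewrite cards1; split; first by move: n2 (max_card [set b; a]); rewrite cards2 nba; lia.
by move=> x y; rewrite !inE => /eqP -> /eqP ->; rewrite eqxx.
Qed.
End Small.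

Section Main.
Variable V : finType.
Implicit Types (w s X u v : seq V) (x y z a : V).

Definition kmin (E : rel V) k :=
  forall k', k' < k -> ~ exists w, k_uniform k' w /\ represents E w.

Lemma count_pos_mem x s : 0 < count_mem x s -> x \in s.
Proof. by rewrite -has_pred1 has_count. Qed.

Lemma case_XX (E : rel V) k w X : k_uniform k w -> represents E w -> w = X ++ X -> 0 < k ->
  kmin E k -> False.
Proof.
move=> U [Rin Ralt] ew kp km.
have cX : forall z, count_mem z X = k %/ 2.
  by move=> z; move: (U z); rewrite ew count_cat; lia.
have cXp : forall z, 0 < count_mem z X.
  by move=> z; move: (U z); rewrite ew count_cat; lia.
apply: (km (k %/ 2)); first by lia.
exists X; split => //; split; first by move=> z; apply: count_pos_mem.
move=> x y nxy; rewrite -Ralt // ew alt_double //; by rewrite !cX.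
Qed.

Lemma sorted_aa_end s a : ~~ sorted neqr (s ++ [:: a; a]).
Proof.
case: s => [|z s] /=; first by rewrite /neqr eqxx.
by rewrite cat_path /= /neqr eqxx !andbF.
Qed.

Lemma clique_excl (E : rel V) w (S : {set V}) X :
  k_uniform 2 w -> represents E w -> #|S| = #|V| - 1 ->
  (forall x y, x \in S -> y \in S -> restrict [set x; y] w = restrict [set x; y] (X ++ X)) ->
  (forall x, x \in S -> count_mem x X = 1) ->
  circle_graph E /\ has_induced_clique E (#|V| - 1).
Proof.
move=> U R cS hr hc; split; first exact: circle2 U R.
exists S; split => // x y xS yS nxy.
have [_ Ralt] := R.
apply/Ralt => //; rewrite alternateE hr // -alternateE alt_double //.
- by apply: alt_one; rewrite ?hc.
- by rewrite hc.
- by rewrite !hc.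
Qed.

Lemma restrict_nseq_out (S : {set V}) a h : a \notin S -> restrict S (nseq h a) = [::].
Proof. by move=> aS; elim: h => // h IH; rewrite -[nseq _ _]/(a :: nseq h a) restrict_cons (negbTE aS). Qed.

Lemma restrict_predC1 x y a X : x != a -> y != a ->
  restrict [set x; y] [seq t <- X | t != a] = restrict [set x; y] X.
Proof.
move=> xa ya; rewrite /restrict -filter_predI; apply: eq_filter => t /=.
by case: (boolP (t \in _)) => //=; rewrite !inE => /orP[]/eqP ->.
Qed.

Lemma restrict_all_a (S : {set V}) a s : all (pred1 a) s -> a \notin S -> restrict S s = [::].
Proof.
move=> al aS; elim: s al => [|z s IH] // al.
rewrite restrict_cons; move: al => /= /andP[/eqP -> al].
by rewrite (negbTE aS) IH.
Qed.

Lemma alt_sym_same w x y : alternate w x y -> alternate w x y.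
Proof. by []. Qed.

Lemma case_aa (E : rel V) k w u v X a :
  k_uniform k w -> represents E w -> w = u ++ X ++ X ++ v ->
  all (pred1 a) (u ++ v) -> size u + size v = 2 -> 4 <= k -> kmin E k -> False.
Proof.
move=> U [Rin Ralt] ew auv suv k4 km.
have cuv : forall z, count_mem z u + count_mem z v = if z == a then 2 else 0.
  move=> z; rewrite -count_cat; case: eqP => [->|nz].
    by move: auv; rewrite all_count size_cat suv => /eqP.
  apply/count_memPn/negP => /(allP auv) /= /eqP; exact: nz.
have cw : forall z, k = count_mem z u + count_mem z X * 2 + count_mem z v.
  by move=> z; rewrite -(U z) ew !count_cat; lia.
set h := k %/ 2.
set w' := nseq h a ++ [seq t <- X | t != a].
have cX : forall z, z != a -> count_mem z X = h.
  move=> z nz; have := cw z; have := cuv z; rewrite (negbTE nz); rewrite /h; lia.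
have cXa : count_mem a X = h - 1.
  have := cw a; have := cuv a; rewrite eqxx /h; lia.
have cw' : forall z, count_mem z w' = h.
  move=> z; rewrite /w' count_cat count_nseq count_filter /=.
  case: (z =P a) => [->|nz].
    rewrite eqxx mul1n (eq_count (a2 := pred0)) ?count_pred0 ?addn0 // => t /=.
    by case: (t =P a).
  rewrite (eq_count (a2 := pred1 z)) ?cX; first by case: (a =P z) => // e; rewrite e in nz.
  - by apply/eqP.
  by move=> t /=; case: (t =P z) => //= ->; apply/eqP.
apply: (km h); first by rewrite /h; lia.
exists w'; split => //; split.
  by move=> z; apply: count_pos_mem; rewrite cw' /h; lia.
have nalt_w : forall y, y != a -> ~ alternate w a y.
  move=> y nya; rewrite alternateE ew !restrict_cat.
  have ru : restrict [set a; y] u = u.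
    rewrite /restrict; apply/all_filterP/allP => t tu; rewrite !inE.
    by have := allP auv t; rewrite mem_cat tu => /(_ isT) /= ->.
  have rv : restrict [set a; y] v = v.
    rewrite /restrict; apply/all_filterP/allP => t tv; rewrite !inE.
    by have := allP auv t; rewrite mem_cat tv orbT => /(_ isT) /= ->.
  rewrite ru rv.
  move: auv suv; case: u {ew cuv cw ru} => [|a1 [|a2 [|? ?]]]; case: v {rv} => [|b1 [|b2 [|? ?]]] //=;
    rewrite ?andbT => auv suv.
  - case/andP: auv => /eqP -> /eqP ->; rewrite catA; apply/negP; exact: sorted_aa_end.
  - case/andP: auv => /eqP -> /eqP -> /=.
    set r := restrict _ X.
    move=> srt.
    have nay : a != y by rewrite eq_sym.
    have hal : all (in2 a y) (a :: r ++ r ++ [:: a]).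
      by rewrite /= !all_cat (restrict_in2 a y X) /= /in2 eqxx.
    have hc : count_mem a (a :: r ++ r ++ [:: a]) = count_mem y (a :: r ++ r ++ [:: a]).
      rewrite /= !count_cat /= eqxx (negbTE nay).
      rewrite /r count_restrict2 count_restrict2' cXa cX //.
      have : 0 < h by rewrite /h; lia.
      lia.
    have := head_last_neq nay srt hal hc.
    by rewrite !last_cat /= eqxx.
  - by case/andP: auv => /eqP -> /eqP -> /=; rewrite /neqr eqxx.
have nalt_w' : forall y, y != a -> ~ alternate w' a y.
  move=> y nya; rewrite alternateE /w' restrict_cat.
  have -> : h = h.-2.+2 by rewrite /h; lia.
  by rewrite /restrict /= !inE eqxx /= /neqr eqxx.
move=> x y nxy; rewrite -Ralt //.
case: (x =P a) => [exa|nxa].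
  subst x; have nya : y != a by rewrite eq_sym.
  by split => H; exfalso; first [exact: nalt_w y nya H | exact: nalt_w' y nya H].
case: (y =P a) => [eya|nya].
  subst y; have nxa' : x != a by apply/eqP.
  by split => /alt_sym H; exfalso; first [exact: nalt_w x nxa' H | exact: nalt_w' x nxa' H].
have nxa' : x != a by apply/eqP.
have nya' : y != a by apply/eqP.
rewrite !alternateE /w' ew !restrict_cat restrict_nseq_out ?inE ?negb_or 1?eq_sym ?nxa' 1?eq_sym ?nya' //.
rewrite restrict_predC1 //.
have aS : a \notin [set x; y] by rewrite !inE negb_or !(eq_sym a) nxa' nya'.
move: auv; rewrite all_cat => /andP[au av].
rewrite (restrict_all_a au aS) (restrict_all_a av aS) cats0 /=.
rewrite (sorted_double nxy) ?restrict_in2 ?count_restrict2 ?count_restrict2' ?cX //.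
apply/eqP => e; have := cX x nxa'; rewrite -(count_restrict2 x y) e /=; rewrite /h; lia.
Qed.
End Main.

Lemma setT_of_card (V : finType) (S : {set V}) : #|S| = #|V| -> S = [set: V].
Proof. move=> c; apply/eqP; rewrite eqEcard cardsT c leqnn andbT; exact: subsetT. Qed.

Lemma exists_other2 (V : finType) (a b : V) : 3 <= #|V| -> exists c, (c != a) && (c != b).
Proof.
move=> n3.
have : 0 < #|[set~ a] :\ b|.
  have := cardsD1 b [set~ a]; rewrite cardsC1; case: (b \in _); lia.
case/card_gt0P => c; rewrite !inE => /andP[cb ca]; exists c; by rewrite ca cb.
Qed.

Lemma two_case (V : finType) (E : rel V) k w u v X a1 a2 :
  k_uniform k w -> represents E w -> w = u ++ X ++ X ++ v -> u ++ v = [:: a1; a2] ->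
  2 <= k -> 3 <= #|V| -> kmin E k -> circle_graph E /\ has_induced_clique E (#|V| - 1).
Proof.
move=> U R ew euv k2 n3 km.
have cw : forall z, k = count_mem z (u ++ v) + count_mem z X * 2.
  by move=> z; rewrite -(U z) ew !count_cat; lia.
case: (a1 =P a2) => [e12|n12]; last first.
  have [c /andP[ca1 ca2]] := exists_other2 a1 a2 n3.
  have h21 : (a2 == a1) = false by apply/negbTE/eqP => e; apply: n12.
  have hc1 : (a1 == c) = false by rewrite eq_sym; apply/negbTE.
  have hc2 : (a2 == c) = false by rewrite eq_sym; apply/negbTE.
  have := cw a1; have := cw c; rewrite euv /= eqxx h21 hc1 hc2.
  lia.
subst a2.
have auv : all (pred1 a1) (u ++ v) by rewrite euv /= eqxx.
have suv : size u + size v = 2 by rewrite -size_cat euv.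
case: (k =P 2) => [ek|nk].
  subst k.
  apply: (clique_excl (S := [set~ a1]) (X := X)) U R _ _ _.
  - by rewrite cardsC1; lia.
  - move=> x y; rewrite !inE => xa ya.
    have aS : a1 \notin [set x; y] by rewrite !inE negb_or !(eq_sym a1) xa ya.
    move: auv; rewrite all_cat => /andP[au av].
    by rewrite ew !restrict_cat (restrict_all_a au aS) (restrict_all_a av aS) cats0.
  - move=> x; rewrite !inE => xa; have := cw x; rewrite euv /= eq_sym (negbTE xa); lia.
exfalso; apply: (case_aa U R ew auv suv) => //.
have := cw a1; rewrite euv /= eqxx; lia.
Qed.

Theorem mainTheorem10 (V : finType) (E : rel V) (k : nat) :
  simple_graph E ->
  word_representable E ->
  representation_number E k ->
  ~ (circle_graph E /\ has_induced_clique E (#|V| - 1)) ->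
  csf_uniform_word_representable E ((k * #|V|).+1 %/ 2 - 1).
Proof.
move=> sg _ [[w [U R]] km] nexc.
have [Rin Ralt] := R.
case: (leqP #|V| 2) => n2; first by exfalso; apply: nexc; exact: (small_graph sg n2).
have /card_gt0P [a0 _] : 0 < #|V| by lia.
have kp : 0 < k by move: (Rin a0); rewrite -has_pred1 has_count U.
case: (k =P 1) => [k1|kn1].
  subst k; case: nexc.
  have Eall : forall x y, x != y -> E x y.
    by move=> x y nxy; apply/Ralt => //; apply: alt_one.
  split.
    apply: (circle2 (w := w ++ w)).
      by move=> z; rewrite count_cat U.
    split; first by move=> z; rewrite mem_cat Rin.
    move=> x y nxy; rewrite alt_double ?U //; split => _; [exact: Eall | exact: alt_one].
  exists [set~ a0]; split; first by rewrite cardsC1; lia.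
  by move=> x y _ _; apply: Eall.
have k2 : 2 <= k by lia.
exists w; split; first by exists k.
split => // -[S [u [X [v [Xn Xall pX ew]]]]].
have sz : size u + 2 * size X + size v = k * #|S|.
  by rewrite -(size_restrict S U) ew !size_cat; lia.
have Sn : #|S| <= #|V| by apply: max_card.
have hp : k * #|V| <= 2 * size X + 2 by move: pX; lia.
have n3 : 3 <= #|V| by lia.
case: (#|S| =P #|V|) => [eS|nS].
  have eS' := setT_of_card eS; rewrite eS' restrictT in ew.
  have hm : size u + size v <= 2 by move: sz; rewrite eS; lia.
  have cw : forall z, k = count_mem z u + count_mem z X * 2 + count_mem z v.
    by move=> z; rewrite -(U z) ew !count_cat; lia.
  clear sz pX Xall Xn eS eS'; move: ew hm cw; case: u => [|a1 [|a2 [|a3 u]]]; case: v => [|b1 [|b2 [|b3 v]]] => ew hm cw;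
    rewrite /= in hm; try (exfalso; lia).
  - by apply: (case_XX U R (X := X)) => //; rewrite ew /= cats0.
  - have [b /andP[ba _]] := exists_other2 b1 b1 n3.
    have := cw b; have := cw b1; rewrite /= eqxx (eq_sym b1) (negbTE ba); lia.
  - exfalso; apply: nexc; apply: (two_case U R ew) => //.
  - have [b /andP[ba _]] := exists_other2 a1 a1 n3.
    have := cw b; have := cw a1; rewrite /= eqxx (eq_sym a1) (negbTE ba); lia.
  - exfalso; apply: nexc; apply: (two_case U R ew) => //.
  - exfalso; apply: nexc; apply: (two_case U R ew) => //.
have lt : #|S| <= #|V| - 1 by lia.
have hm : k * #|S| <= k * #|V| - k.
  by have := leq_mul (leqnn k) lt; rewrite mulnBr muln1.
have ek : k = 2 by lia.
subst k.
have su : size u = 0 by lia.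
have sv : size v = 0 by lia.
have cS : #|S| = #|V| - 1 by lia.
move/size0nil: su => eu; move/size0nil: sv => ev; subst u v.
have cC : #|~: S| == 1 by have := cardsC S; rewrite cS; lia.
case/cards1P: cC => a ea.
have inS : forall x, (x \in S) = (x != a).
  by move=> x; rewrite -[x \in S]negbK -in_setC ea inE.
exfalso; apply: nexc; apply: (clique_excl (S := S) (X := X) U R cS).
- move=> x y xS yS; rewrite -(restrict_restrict (S := S)); first by rewrite ew /= cats0.
  by move=> t; rewrite !inE => /orP[]/eqP ->.
- move=> x xS; have := count_restrict S x w; rewrite xS U ew /= cats0 count_cat; lia.
Qed.
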